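(* Let $\mathcal{A}$ and $\mathcal{B}$ be two stochastic CA with the same set of states $Q$ (and possibly different random alphabets) and explicit global functions $F$ and $G$. If $S_F=S_G$ then $S_F^t=S_G^t$ for all $t\ge1$.
   Context: A stochastic CA is $(Q,R,V,V',f)$ with $Q$ finite states, $R$ finite random symbols, $V=\{v_1,\dots,v_r\}$, $V'=\{v'_1,\dots,v'_{r'}\}$ finite subsets of $\mathbb{Z}$, $f:Q^r\times R^{r'}\to Q$; explicit global function $F(c,s)_z=f((c_{z+v_1},\dots,c_{z+v_r}),(s_{z+v'_1},\dots,s_{z+v'_{r'}}))$. Iterates: $F^0(c)=c$, $F^{t+1}(c,s^1,\dots,s^{t+1})=F(F^t(c,s^1,\dots,s^t),s^{t+1})$. $\nu_R$ is the uniform Bernoulli measure on $R^{\mathbb{Z}}$ and $\nu_{R^t}$ the uniform (product) measure on $(R^{\mathbb{Z}})^t$. For cylinders $[u]_z=\{c:c_{z+x}=u_x,0\le x<|u|\}$: $S_F(c)([u]_z)=\nu_R\{s:F(c,s)\in[u]_z\}$ and $S_F^t(c)([u]_z)=\nu_{R^t}\{(s^1,\dots,s^t): F^t(c,s^1,\dots,s^t)\in[u]_z\}$, which determine Borel probability measures on $Q^{\mathbb{Z}}$. *)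

(* Defs.v *)
From mathcomp Require Import all_boot all_order all_algebra.
Set Implicit Arguments. Unset Strict Implicit. Unset Printing Implicit Defensive.
Import Order.TTheory GRing.Theory Num.Theory.
Local Open Scope ring_scope.

(* R is the (finite, nonempty: the uniform measure on R must exist) random
   alphabet, V = [v_1;..;v_r] and V' = [v'_1;..;v'_r'] are finite subsets of Z
   listed without repetition, f : Q^r x R^r' -> Q. *)
Record sca (Q : finType) := Sca {
  sca_R : finType;
  sca_r0 : sca_R;
  sca_V : seq int;
  sca_V' : seq int;
  sca_Vuniq : uniq sca_V;
  sca_V'uniq : uniq sca_V';
  sca_f : (size sca_V).-tuple Q -> (size sca_V').-tuple sca_R -> Q
}.

Definition config (T : Type) := int -> T.

Definition glob (Q : finType) (A : sca Q) (c : config Q) (s : config (sca_R A))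
  : config Q :=
  fun z => sca_f
    [tuple c (z + tnth (in_tuple (sca_V A)) i) | i < size (sca_V A)]
    [tuple s (z + tnth (in_tuple (sca_V' A)) j) | j < size (sca_V' A)].

Definition glob_iter (Q : finType) (A : sca Q) (c : config Q)
  (ss : seq (config (sca_R A))) : config Q :=
  foldl (@glob Q A) c ss.

Definition in_cyl (Q : finType) (u : seq Q) (z : int) (c : config Q) : bool :=
  [forall x : 'I_(size u), c (z + (x : nat)%:Z) == tnth (in_tuple u) x].

Definition sca_rad (Q : finType) (A : sca Q) : nat :=
  \max_(v <- sca_V A ++ sca_V' A) `|v|%N.

(* extend an assignment g of the window [lo, lo+len) to a configuration of Z
   (the value outside the window is irrelevant for the events considered) *)
Definition ext_window (T : Type) (t0 : T) (lo : int) (len : nat)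
  (g : {ffun 'I_len -> T}) : config T :=
  fun i => if lo <= i then
             match insub `|i - lo|%N with Some k => g k | None => t0 end
           else t0.

(* S_F^t(c)([u]_z) = nu_{R^t}{(s^1..s^t) : F^t(c,s^1..s^t) \in [u]_z}.
   The event only depends on the coordinates of each s^k in the window
   W = [z - tM, z + |u| + tM), so its measure under the uniform Bernoulli
   product measure is the proportion of the |R|^(t|W|) assignments of the
   random symbols on W (for each of the t random configurations) realising it. *)
Definition St (Q : finType) (A : sca Q) (t : nat) (c : config Q)
  (u : seq Q) (z : int) : rat :=
  let M := (t * sca_rad A)%N in
  let lo := z - M%:Z in
  let len := (size u + 2 * M)%N in
  (#|[set w : {ffun 'I_t -> {ffun 'I_len -> sca_R A}} |
      in_cyl u z (@glob_iter Q A c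
        [seq ext_window (sca_r0 A) lo (w k) | k <- enum 'I_t])]|%:R
   / (#|sca_R A| ^ (t * len))%:R).

Definition SF (Q : finType) (A : sca Q) (c : config Q) (u : seq Q) (z : int) : rat :=
  St A 1 c u z.

(* Main.v *)
Require Import Defs.
From mathcomp Require Import all_boot all_order all_algebra zify.
Set Implicit Arguments. Unset Strict Implicit. Unset Printing Implicit Defensive.
Import Order.TTheory GRing.Theory Num.Theory.
Local Open Scope ring_scope.

Lemma extE (T : Type) (t0 : T) lo len (g : {ffun 'I_len -> T}) (i : 'I_len) :
  ext_window t0 lo g (lo + (i : nat)%:Z) = g i.
Proof.
rewrite /ext_window.
have -> : lo <= lo + (i : nat)%:Z by lia.
have -> : `|(lo + (i : nat)%:Z - lo)%R|%N = i by lia.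
by rewrite valK.
Qed.

Lemma in_win lo len (x : int) : lo <= x -> x < lo + len%:Z ->
  exists i : 'I_len, x = lo + (i : nat)%:Z.
Proof.
move=> h1 h2; have hi : (`|(x - lo)%R| < len)%N by lia.
by exists (Ordinal hi) => /=; lia.
Qed.

Lemma rad_mem (Q : finType) (A : sca Q) v :
  (v \in sca_V A) || (v \in sca_V' A) -> (`|v| <= sca_rad A)%N.
Proof.
move=> h; rewrite /sca_rad.
have := @leq_bigmax_seq int (sca_V A ++ sca_V' A) xpredT (fun v => `|v|%N) v.
rewrite mem_cat => H; exact: H.
Qed.

Lemma glob_dep (Q : finType) (A : sca Q) N c c' s s' (p : int) :
  (sca_rad A <= N)%N ->
  (forall i, p - N%:Z <= i -> i <= p + N%:Z -> c i = c' i) ->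
  (forall i, p - N%:Z <= i -> i <= p + N%:Z -> s i = s' i) ->
  @glob Q A c s p = @glob Q A c' s' p.
Proof.
move=> hN hc hs; rewrite /glob; congr sca_f; apply: eq_mktuple => j.
- have h := rad_mem (v := tnth (in_tuple (sca_V A)) j) (introT orP (or_introl (mem_tnth _ _))).
  apply: hc; lia.
- have h := rad_mem (v := tnth (in_tuple (sca_V' A)) j) (introT orP (or_intror (mem_tnth _ _))).
  apply: hs; lia.
Qed.

Lemma iter_dep (Q : finType) (A : sca Q) N (s0 : config (sca_R A)) ss :
  (sca_rad A <= N)%N ->
  forall ss' c c' (p : int), size ss = size ss' ->
  (forall i, p - (size ss * N)%N%:Z <= i -> i <= p + (size ss * N)%N%:Z -> c i = c' i) ->
  (forall k i, (k < size ss)%N -> p - (size ss * N)%N%:Z <= i -> i <= p + (size ss * N)%N%:Z ->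
      nth s0 ss k i = nth s0 ss' k i) ->
  @glob_iter Q A c ss p = @glob_iter Q A c' ss' p.
Proof.
move=> hN; elim: ss => [|s ss IH] [|s' ss'] c c' p //=.
- move=> _ hc _; apply: hc; lia.
- move=> [hsz] hc hs; rewrite /glob_iter /=; apply: IH => //.
  + move=> i h1 h2; apply: (glob_dep hN).
    * move=> j h3 h4; apply: hc; rewrite mulSn; lia.
    * move=> j h3 h4; apply: (hs 0%N) => //; rewrite mulSn; lia.
  + move=> k i hk h1 h2; apply: (hs k.+1) => //; rewrite mulSn; lia.
Qed.

Lemma GC (X Y : finType) (pi : X -> Y) (rho : X -> X) (upd : Y -> X -> X) :
  (forall y x, pi (upd y x) = y) -> (forall y x, rho (upd y x) = rho x) ->
  (forall x1 x2, pi x1 = pi x2 -> rho x1 = rho x2 -> x1 = x2) ->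
  forall P : pred Y,
  #|[set x | P (pi x)]| = (#|[set y | P y]| * #|[set rho x | x in X]|)%N.
Proof.
move=> h1 h2 h3 P.
have inj : injective (fun x => (pi x, rho x)).
  by move=> x1 x2 [] /h3 H /H.
rewrite -cardsX -(card_imset _ inj).
suff -> : [set (pi x, rho x) | x : X & P (pi x)] = setX [set y | P y] [set rho x | x in X] by [].
apply/setP => -[y z].
rewrite in_setX !inE; apply/imsetP/andP.
- move=> [x]; rewrite inE => Hx [-> ->]; split => //; apply/imsetP; by exists x.
- move=> [Py /imsetP [x _ ->]]; exists (upd y x); by rewrite ?inE ?h1 ?h2.
Qed.

Definition Pr (R : finType) (r0 : R) (t : nat) (lo : int) (len : nat)
  (P : seq (config R) -> bool) : rat :=
  #|[set w : {ffun 'I_t -> {ffun 'I_len -> R}} |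
      P [seq ext_window r0 lo (w k) | k <- enum 'I_t]]|%:R
   / (#|R| ^ (t * len))%:R.

Definition depw (R : finType) t lo' len' (P : seq (config R) -> bool) :=
  forall f g : 'I_t -> config R,
  (forall k (j : 'I_len'), f k (lo' + (j : nat)%:Z) = g k (lo' + (j : nat)%:Z)) ->
  P (map f (enum 'I_t)) = P (map g (enum 'I_t)).

Lemma card_X (R : finType) t len :
  #|{ffun 'I_t -> {ffun 'I_len -> R}}| = (#|R| ^ (t * len))%N.
Proof. by rewrite !card_ffun !card_ord mulnC expnM. Qed.

Lemma WI (R : finType) (r0 : R) t lo len lo' len' P :
  lo <= lo' -> lo' + len'%:Z <= lo + len%:Z -> depw t lo' len' P ->
  Pr r0 t lo len P = Pr r0 t lo' len' P.
Proof.
move=> hlo hhi hP.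
pose X := {ffun 'I_t -> {ffun 'I_len -> R}}.
pose Y := {ffun 'I_t -> {ffun 'I_len' -> R}}.
pose pi (w : X) : Y := [ffun k => [ffun j : 'I_len' => ext_window r0 lo (w k) (lo' + (j : nat)%:Z)]].
pose inw (x : int) := (lo' <= x) && (x < lo' + len'%:Z).
pose upd (y : Y) (w : X) : X := [ffun k => [ffun i : 'I_len =>
   if inw (lo + (i : nat)%:Z) then ext_window r0 lo' (y k) (lo + (i : nat)%:Z) else w k i]].
pose y0 : Y := [ffun k => [ffun j => r0]].
pose rho w := upd y0 w.
have h1 : forall y x, pi (upd y x) = y.
  move=> y x; apply/ffunP => k; apply/ffunP => j; rewrite !ffunE.
  have [i Hi] : exists i : 'I_len, lo' + (j : nat)%:Z = lo + (i : nat)%:Z.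
    by have hj := ltn_ord j; apply: in_win; lia.
  rewrite Hi extE !ffunE.
  have -> : inw (lo + (i : nat)%:Z) by rewrite /inw -Hi; apply/andP; have hj := ltn_ord j; split; lia.
  by rewrite -Hi extE.
have h2 : forall y x, rho (upd y x) = rho x.
  move=> y x; apply/ffunP => k; apply/ffunP => i; rewrite !ffunE.
  by case: ifP => // ->.
have h3 : forall x1 x2, pi x1 = pi x2 -> rho x1 = rho x2 -> x1 = x2.
  move=> x1 x2 e1 e2; apply/ffunP => k; apply/ffunP => i.
  case hi: (inw (lo + (i : nat)%:Z)).
  - move: hi => /andP [a b].
    have [j Hj] := in_win a b.
    have := congr1 (fun w : Y => w k j) e1; rewrite !ffunE -Hj !extE //.
  - have := congr1 (fun w : X => w k i) e2; rewrite !ffunE hi //.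
have key := GC h1 h2 h3 (fun y : Y => P [seq ext_window r0 lo' (y k) | k <- enum 'I_t]).
have keyT := GC h1 h2 h3 xpredT.
have ev : forall w : X, P [seq ext_window r0 lo (w k) | k <- enum 'I_t] =
   P [seq ext_window r0 lo' (pi w k) | k <- enum 'I_t].
  move=> w; apply: (hP (fun k => ext_window r0 lo (w k)) (fun k => ext_window r0 lo' (pi w k))) => k j.
  by rewrite [RHS]extE /pi !ffunE.
rewrite /Pr.
have -> : [set w : X | P [seq ext_window r0 lo (w k) | k <- enum 'I_t]] =
          [set w : X | P [seq ext_window r0 lo' (pi w k) | k <- enum 'I_t]].
  by apply/setP => w; rewrite !inE ev.
rewrite key -!card_X -/X -/Y.
have cX : #|[set x : X | xpredT (pi x)]| = #|X| by apply: eq_card => x; rewrite inE.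
have cY : #|[set y : Y | xpredT y]| = #|Y| by apply: eq_card => x; rewrite inE.
rewrite -cX keyT cY !natrM.
have hm : (#|[set rho x | x in X]|%:R : rat) != 0.
  rewrite pnatr_eq0 -lt0n; apply/card_gt0P; exists (rho [ffun k => [ffun i => r0]]); apply/imsetP; by exists [ffun k => [ffun i => r0]].
rewrite invfM mulrACA divff // mulr1.
by [].
Qed.

Lemma card_sum (T : finType) (Q : pred T) : #|[set w | Q w]| = (\sum_(w : T) (Q w : nat))%N.
Proof.
rewrite -sum1_card big_mkcond /=; apply: eq_bigr => w _; rewrite inE; by case: (Q w).
Qed.

Lemma Pr0 (R : finType) (r0 : R) lo len P : Pr r0 0 lo len P = (P [::])%:R.
Proof.
rewrite /Pr enum_ord0 /= mul0n expn0 divr1 card_sum.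
case: (P [::]) => /=; last by rewrite big1.
by rewrite sum1_card card_ffun card_ord expn0.
Qed.

Lemma Pr_split (R : finType) (r0 : R) t lo len P :
  Pr r0 t.+1 lo len P = (\sum_(x : {ffun 'I_len -> R})
      Pr r0 t lo len (fun ss => P (ext_window r0 lo x :: ss))) / (#|R| ^ len)%:R.
Proof.
pose X := {ffun 'I_len -> R}.
pose h (p : X * {ffun 'I_t -> X}) : {ffun 'I_t.+1 -> X} :=
  [ffun k => if unlift ord0 k is Some k' then p.2 k' else p.1].
pose g (w : {ffun 'I_t.+1 -> X}) : X * {ffun 'I_t -> X} := (w ord0, [ffun k => w (lift ord0 k)]).
have hK : cancel h g.
  move=> [x w']; rewrite /g /h /= !ffunE unlift_none; congr pair.
  by apply/ffunP => k; rewrite !ffunE liftK.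
have gK : cancel g h.
  move=> w; apply/ffunP => k; rewrite /g /h ffunE /=.
  by case: unliftP => [k'|] -> //=; rewrite ffunE.
have ec : #|[set w : {ffun 'I_t.+1 -> X} | P [seq ext_window r0 lo (w k) | k <- enum 'I_t.+1]]| =
   (\sum_(x : X) #|[set w : {ffun 'I_t -> X} | P (ext_window r0 lo x :: [seq ext_window r0 lo (w k) | k <- enum 'I_t])]|)%N.
  rewrite card_sum (reindex h); last by exists g => p _; [apply: hK | apply: gK].
  under [RHS]eq_bigr do rewrite card_sum.
  rewrite pair_bigA /=; apply: eq_bigr => -[x w'] _ /=.
  rewrite enum_ordSl /= -map_comp /h ffunE unlift_none /=.
  congr (nat_of_bool (P (_ :: _))); apply: eq_map => k /=; by rewrite ffunE liftK.
rewrite /Pr ec natr_sum -mulr_suml mulSn expnD natrM invfM mulrA.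
by rewrite -!mulrA [X in _ * X]mulrC.
Qed.

Definition Pev (Q : finType) (A : sca Q) (c : config Q) (u : seq Q) (z : int) :=
  fun ss : seq (config (sca_R A)) => in_cyl u z (glob_iter c ss).
Arguments Pev {Q} A c u z.

Lemma Pev_dep (Q : finType) (A : sca Q) t c u z N : (sca_rad A <= N)%N ->
  depw t (z - (t * N)%N%:Z) (size u + 2 * (t * N))%N (Pev A c u z).
Proof.
move=> hN f g H; rewrite /Pev /in_cyl; apply: eq_forallb => x; congr (_ == _).
have hx := ltn_ord x.
apply: (iter_dep (s0 := fun _ => sca_r0 A) hN); rewrite ?size_map ?size_enum_ord //.
move=> k i hk h1 h2.
move: hk h1 h2; rewrite -enumT size_enum_ord => hk h1 h2.
rewrite (nth_map (Ordinal hk)) ?size_enum_ord // (nth_map (Ordinal hk)) ?size_enum_ord //.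
have -> : nth (Ordinal hk) (enum 'I_t) k = Ordinal hk by apply: val_inj; rewrite /= nth_enum_ord.
have [j ->] : exists j : 'I_(size u + 2 * (t * N))%N, i = z - (t * N)%N%:Z + (j : nat)%:Z.
  apply: in_win; lia.
exact: H.
Qed.

Lemma St_win (Q : finType) (A : sca Q) t c u z lo len :
  lo <= z - (t * sca_rad A)%N%:Z -> z + (size u)%:Z + (t * sca_rad A)%N%:Z <= lo + len%:Z ->
  St A t c u z = Pr (sca_r0 A) t lo len (Pev A c u z).
Proof.
move=> h1 h2.
have -> : St A t c u z = Pr (sca_r0 A) t (z - (t * sca_rad A)%N%:Z)
   (size u + 2 * (t * sca_rad A))%N (Pev A c u z) by [].
symmetry; apply: WI; [lia | lia | exact: Pev_dep].
Qed.

Definition cfg (Q : finType) (q0 : Q) (z' : int) (v : seq Q) : config Q :=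
  fun x => nth q0 v `|(x - z')%R|%N.

Lemma part (Q : finType) (q0 : Q) n z' (c' : config Q) (h : config Q -> rat) :
  (forall c1 c2, (forall j : 'I_n, c1 (z' + (j : nat)%:Z) = c2 (z' + (j : nat)%:Z)) -> h c1 = h c2) ->
  h c' = \sum_(v : n.-tuple Q) (in_cyl v z' c')%:R * h (cfg q0 z' v).
Proof.
move=> hh.
pose v0 := [tuple c' (z' + (j : nat)%:Z) | j < n].
have nv0 : forall i : 'I_n, nth q0 v0 i = c' (z' + (i : nat)%:Z) by move=> i; rewrite nth_mktuple.
rewrite (bigD1 v0) //= big1 ?addr0.
- have -> : in_cyl v0 z' c' = true.
    apply/forallP => x; rewrite (tnth_nth q0) /=.
    have hx : (x < n)%N by rewrite -[X in (_ < X)%N](size_tuple v0).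
    by rewrite -[nat_of_ord x]/(nat_of_ord (Ordinal hx)) nv0.
  rewrite mul1r; apply: hh => j; rewrite /cfg.
  have -> : `|(z' + (j : nat)%:Z - z')%R|%N = j by lia.
  by rewrite nv0.
- move=> v hv.
  have -> : in_cyl v z' c' = false.
    apply/negbTE; apply: contra hv => /forallP H; apply/eqP; apply: val_inj.
    apply: (eq_from_nth (x0 := q0)); first by rewrite !size_tuple.
    move=> i hi; have := H (Ordinal hi); rewrite (tnth_nth q0) /= => /eqP <-.
    have hi' : (i < n)%N by rewrite -(size_tuple v).
    by rewrite -[i]/(nat_of_ord (Ordinal hi')) nv0.
  by rewrite mul0r.
Qed.

Lemma St_dep (Q : finType) (A : sca Q) t u z lo len c1 c2 :
  lo <= z - (t * sca_rad A)%N%:Z -> z + (size u)%:Z + (t * sca_rad A)%N%:Z <= lo + len%:Z ->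
  (forall j : 'I_len, c1 (lo + (j : nat)%:Z) = c2 (lo + (j : nat)%:Z)) ->
  St A t c1 u z = St A t c2 u z.
Proof.
move=> h1 h2 H; rewrite /St; congr (_%:R / _); apply: eq_card => w; rewrite !inE.
apply: eq_forallb => x; congr (_ == _); have hx := ltn_ord x.
apply: (iter_dep (s0 := fun _ => sca_r0 A) (leqnn _)) => //.
move=> i; rewrite size_map ?size_enum_ord => a b; move: a b; rewrite ?(-enumT) ?size_enum_ord => a b.
have [j ->] : exists j : 'I_len, i = lo + (j : nat)%:Z by apply: in_win; lia.
exact: H.
Qed.

Arguments St_win {Q A t c u z} lo len.
Arguments St_dep {Q A t u z} lo len {c1 c2}.
Arguments part {Q} q0 {n z' c'} h.

Lemma CK (Q : finType) (A : sca Q) t N c u z (q0 : Q) : (sca_rad A <= N)%N ->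
  St A t.+1 c u z = \sum_(v : (size u + 2 * (t * N))%N.-tuple Q)
     SF A c v (z - (t * N)%N%:Z) * St A t (cfg q0 (z - (t * N)%N%:Z) v) u z.
Proof.
move=> hN.
have m1 : (t * sca_rad A <= t * N)%N by apply: leq_mul.
have m2 : (t.+1 * N = N + t * N)%N by rewrite mulSn.
have m3 : (t.+1 * sca_rad A = sca_rad A + t * sca_rad A)%N by rewrite mulSn.
set w0 := z - (t * N)%N%:Z.
set n := (size u + 2 * (t * N))%N.
set lo := z - (t.+1 * N)%N%:Z.
set len := (size u + 2 * (t.+1 * N))%N.
rewrite (St_win lo len); [|rewrite /lo; lia|rewrite /lo /len; lia].
rewrite Pr_split.
have E : forall x : {ffun 'I_len -> sca_R A},
  Pr (sca_r0 A) t lo len (fun ss => Pev A c u z (ext_window (sca_r0 A) lo x :: ss)) =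
  St A t (glob c (ext_window (sca_r0 A) lo x)) u z.
  by move=> x; rewrite (St_win lo len) //; rewrite /lo /len; lia.
have d1 : w0 <= z - (t * sca_rad A)%N%:Z by rewrite /w0; lia.
have d2 : z + (size u)%:Z + (t * sca_rad A)%N%:Z <= w0 + n%:Z by rewrite /w0 /n; lia.
under eq_bigr => x _ do rewrite E (@part _ q0 n w0 (glob c (ext_window (sca_r0 A) lo x))
   (fun c' => St A t c' u z) (fun c1 c2 H => St_dep w0 n d1 d2 H)).
rewrite exchange_big /= mulr_suml; apply: eq_bigr => v _.
rewrite -mulr_suml mulrAC; congr (_ * _).
have sv : size v = n by rewrite size_tuple.
rewrite /SF (St_win lo len); [|rewrite /lo /w0; lia|rewrite /lo /len /w0 sv; lia].
rewrite Pr_split; congr (_ / _); apply: eq_bigr => x _.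
by rewrite Pr0.
Qed.

Theorem fact1 (Q : finType) (A B : sca Q) :
  (forall (c : config Q) (u : seq Q) (z : int), SF A c u z = SF B c u z) ->
  forall t : nat, (1 <= t)%N ->
  forall (c : config Q) (u : seq Q) (z : int), St A t c u z = St B t c u z.
Proof.
move=> H t _; elim: t => [|t IH] c u z.
- rewrite (St_win z (size u)) ?(St_win z (size u) (A := B)) ?Pr0 //; lia.
- rewrite (@CK _ A t (maxn (sca_rad A) (sca_rad B)) c u z (c 0)) ?leq_maxl //.
  rewrite (@CK _ B t (maxn (sca_rad A) (sca_rad B)) c u z (c 0)) ?leq_maxr //.
  by apply: eq_bigr => v _; rewrite H IH.
Qed.
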